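(* For every formula $\varphi$ there exists a formula $\varphi'$ with $\varphi'\equiv\varphi$ such that $\varphi'$ is in first normal form (i.e. $\mathrm{ubw}(\varphi') = 0$), $|\varphi'| \leq 4^{2|\varphi|}\cdot|\varphi|$, for every subformula $\mathbf{GF}\psi$ of $\varphi'$ the formula $\psi$ is a subformula of $\varphi$, and every subformula of $\varphi'$ of the form $\mathbf{FG}\chi$ is also a subformula of $\varphi$.
   Context: Fix a finite set $Ap$ of atomic propositions. A word is an infinite sequence $w = w[0]w[1]\dots$ of letters of $2^{Ap}$, and $w_i$ denotes the suffix $w[i]w[i+1]\dots$. Formulas are generated by $\varphi ::= \mathbf{true} \mid \mathbf{false} \mid a \mid \neg a \mid \varphi\wedge\varphi \mid \varphi\vee\varphi \mid \mathbf{X}\varphi \mid \varphi\,\mathbf{U}\,\varphi \mid \varphi\,\mathbf{W}\,\varphi \mid \mathbf{GF}\varphi \mid \mathbf{FG}\varphi$ ($a\in Ap$), where $\mathbf{GF}$, $\mathbf{FG}$ are single unary operators (limit operators). Semantics: $w\models a$ iff $a\in w[0]$, $w\models\neg a$ iff $a\notin w[0]$, Boolean constants and connectives as usual; $w\models\mathbf{X}\varphi$ iff $w_1\models\varphi$; $w\models\varphi\mathbf{U}\psi$ iff $\exists k$: $w_k\models\psi$ and $\forall j<k$: $w_j\models\varphi$; $w\models\varphi\mathbf{W}\psi$ iff ($\forall k$: $w_k\models\varphi$) or $w\models\varphi\mathbf{U}\psi$; $w\models\mathbf{GF}\varphi$ iff $w_k\models\varphi$ for infinitely many $k$; $w\models\mathbf{FG}\varphi$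 iff $\exists n\,\forall k\geq n$: $w_k\models\varphi$. $\varphi\equiv\psi$ means both are satisfied by the same words. The syntax tree $T_\varphi$ has leaves $\mathbf{true},\mathbf{false},a,\neg a$ and one internal node per operator occurrence; $|\varphi|$ is its number of nodes. A $\mathbf{U}$-node (resp. $\mathbf{W}$-node, limit node) is a node whose subformula has top operator $\mathbf{U}$ (resp. $\mathbf{W}$, $\mathbf{GF}$ or $\mathbf{FG}$). A node is under another if it is a proper descendant of it. $\mathrm{ubw}(\varphi)$ is the number of $\mathbf{U}$-nodes of $T_\varphi$ that are under some $\mathbf{W}$-node but not under any limit node. A formula $\varphi$ is in first normal form if $\mathrm{ubw}(\varphi)=0$. *)

(* Defs.v *)
From mathcomp Require Import all_boot.
Set Implicit Arguments. Unset Strict Implicit. Unset Printing Implicit Defensive.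

Section LTL.
Variable Ap : finType.

Inductive formula : Type :=
| Ftrue | Ffalse
| Fatom of Ap
| Fnatom of Ap
| Fand of formula & formula
| For of formula & formula
| FX of formula
| FU of formula & formula
| FW of formula & formula
| FGF of formula
| FFG of formula.

Definition word := nat -> {set Ap}.
Definition suffix (w : word) (i : nat) : word := fun n => w (i + n).

Fixpoint sat (w : word) (f : formula) : Prop :=
  match f with
  | Ftrue => True
  | Ffalse => False
  | Fatom a => a \in w 0
  | Fnatom a => a \notin w 0
  | Fand f1 f2 => sat w f1 /\ sat w f2
  | For f1 f2 => sat w f1 \/ sat w f2
  | FX f1 => sat (suffix w 1) f1
  | FU f1 f2 => exists k, sat (suffix w k) f2 /\ forall j, j < k -> sat (suffix w j) f1
  | FW f1 f2 => (forall k, sat (suffix w k) f1) \/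
                (exists k, sat (suffix w k) f2 /\ forall j, j < k -> sat (suffix w j) f1)
  | FGF f1 => forall n, exists k, n <= k /\ sat (suffix w k) f1
  | FFG f1 => exists n, forall k, n <= k -> sat (suffix w k) f1
  end.

Definition fequiv (f g : formula) : Prop := forall w, sat w f <-> sat w g.

Fixpoint fsize (f : formula) : nat :=
  match f with
  | Ftrue | Ffalse | Fatom _ | Fnatom _ => 1
  | Fand f1 f2 | For f1 f2 | FU f1 f2 | FW f1 f2 => (fsize f1 + fsize f2).+1
  | FX f1 | FGF f1 | FFG f1 => (fsize f1).+1
  end.

Fixpoint subf (psi f : formula) : Prop :=
  psi = f \/
  match f with
  | Ftrue | Ffalse | Fatom _ | Fnatom _ => False
  | Fand f1 f2 | For f1 f2 | FU f1 f2 | FW f1 f2 => subf psi f1 \/ subf psi f2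
  | FX f1 | FGF f1 | FFG f1 => subf psi f1
  end.

(* ubw_aux b f: number of U-nodes of f that are under some W-node (counting
   b = true as "f itself is under a W-node") and not under any limit node
   (nodes strictly below a GF/FG node are never counted). *)
Fixpoint ubw_aux (b : bool) (f : formula) : nat :=
  match f with
  | Ftrue | Ffalse | Fatom _ | Fnatom _ => 0
  | Fand f1 f2 | For f1 f2 => ubw_aux b f1 + ubw_aux b f2
  | FX f1 => ubw_aux b f1
  | FU f1 f2 => b + ubw_aux b f1 + ubw_aux b f2
  | FW f1 f2 => ubw_aux true f1 + ubw_aux true f2
  | FGF _ | FFG _ => 0
  end.

Definition ubw (f : formula) : nat := ubw_aux false f.
Definition first_normal_form (f : formula) : Prop := ubw f = 0.

End LTL.

(* Main.v *)
Require Import Defs.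
From mathcomp Require Import all_boot zify.
From Stdlib Require List.
From Stdlib Require Import Setoid FunctionalExtensionality Classical.

Definition prodl {A : Type} (h : A -> A -> list A) (l1 l2 : list A) : list A :=
  List.flat_map (fun p1 => List.flat_map (h p1) l2) l1.

Fixpoint E {Ap : finType} (f : formula Ap) : list (formula Ap * formula Ap) :=
  match f with
  | Fand a b => prodl (fun p q => [:: (Fand p.1 q.1, Fand p.2 q.2)]) (E a) (E b)
  | For a b => prodl (fun p q => [:: (Fand p.1 q.1, For p.2 q.2)]) (E a) (E b)
  | FX a => List.map (fun p => (p.1, FX p.2)) (E a)
  | FU a b => prodl (fun p q => [:: (Fand (FGF b) (Fand p.1 q.1), FW p.2 q.2);
                                    (Fand p.1 q.1, Ffalse Ap)]) (E a) (E b)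
  | FW a b => prodl (fun p q => [:: (Fand p.1 q.1, FW p.2 q.2)]) (E a) (E b)
  | _ => [:: (Ftrue Ap, f)]
  end.

Fixpoint Dl {Ap : finType} (l : list (formula Ap * formula Ap)) : formula Ap :=
  match l with
  | [::] => Ffalse Ap
  | p :: l => For (Fand p.1 (FW p.2 (Ffalse Ap))) (Dl l)
  end.

Fixpoint N {Ap : finType} (f : formula Ap) : formula Ap :=
  match f with
  | Fand a b => Fand (N a) (N b)
  | For a b => For (N a) (N b)
  | FX a => FX (N a)
  | FU a b => FU (N a) (N b)
  | FW a b => FU (N a) (For (N b) (Dl (E a)))
  | _ => f
  end.

Lemma suffix_add {Ap : finType} (w : word Ap) i j :
  Defs.suffix (Defs.suffix w i) j = Defs.suffix w (i + j).
Proof. apply: functional_extensionality => n; by rewrite /Defs.suffix addnA. Qed.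

Lemma in_prodl {A : Type} (h : A -> A -> list A) l1 l2 x :
  List.In x (prodl h l1 l2) <->
  exists p1 p2, List.In p1 l1 /\ List.In p2 l2 /\ List.In x (h p1 p2).
Proof.
  rewrite /prodl List.in_flat_map; split.
  - move=> [p1 [H1 H2]]; move: H2; rewrite List.in_flat_map => [[p2 [H2 H3]]].
    by exists p1, p2.
  - move=> [p1 [p2 [H1 [H2 H3]]]]; exists p1; split => //.
    rewrite List.in_flat_map; by exists p2.
Qed.

Lemma len_prodl {A : Type} (h : A -> A -> list A) l1 l2 c :
  (forall p q, length (h p q) = c) ->
  length (prodl h l1 l2) = length l1 * length l2 * c.
Proof.
  move=> Hc; rewrite /prodl; elim: l1 => [|p1 l1 IH] //=.
  rewrite List.length_app IH.
  have -> : length (List.flat_map (h p1) l2) = length l2 * c.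
    elim: l2 {IH} => [|p2 l2 IH2] //=; rewrite List.length_app IH2 Hc; lia.
  lia.
Qed.

Lemma GF_shift {Ap : finType} (w : word Ap) x k :
  sat w (FGF x) -> sat (Defs.suffix w k) (FGF x).
Proof.
  move=> /= H n; have [k' [Hk' Hs]] := H (k + n).
  exists (k' - k); split; first lia.
  rewrite suffix_add; have -> : k + (k' - k) = k' by lia. done.
Qed.

Lemma E_guard {Ap : finType} (a : formula Ap) :
  forall p, List.In p (E a) -> forall w k, sat w p.1 -> sat (Defs.suffix w k) p.1.
Proof.
  elim: a => //=.
  - by move=> p [<-|[]].
  - by move=> p [<-|[]].
  - by move=> x p [<-|[]].
  - by move=> x p [<-|[]].
  - move=> a IHa b IHb p /in_prodl [p1 [p2 [H1 [H2 [<-|[]]]]]] w k /= [Ha Hb].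
    by split; [apply: IHa | apply: IHb].
  - move=> a IHa b IHb p /in_prodl [p1 [p2 [H1 [H2 [<-|[]]]]]] w k /= [Ha Hb].
    by split; [apply: IHa | apply: IHb].
  - move=> a IHa p /List.in_map_iff [q [<- Hq]] w k /=; exact: IHa.
  - move=> a IHa b IHb p /in_prodl [p1 [p2 [H1 [H2 [<-|[<-|[]]]]]]] w k /=.
    + move=> [Hg [Ha Hb]]; split; first exact: GF_shift.
      by split; [apply: IHa | apply: IHb].
    + move=> [Ha Hb]. by split; [apply: IHa | apply: IHb].
  - move=> a IHa b IHb p /in_prodl [p1 [p2 [H1 [H2 [<-|[]]]]]] w k /= [Ha Hb].
    by split; [apply: IHa | apply: IHb].
  - by move=> a _ p [<-|[]].
  - by move=> a _ p [<-|[]].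
Qed.

Arguments E_guard {Ap a p}.
Ltac leaf := intros; simpl in *; repeat (match goal with H : _ \/ False |- _ => destruct H as [H|[]] end); subst; simpl in *; auto.

Lemma E_sound {Ap : finType} (a : formula Ap) :
  forall p, List.In p (E a) -> forall w, sat w p.1 -> sat w p.2 -> sat w a.
Proof.
  elim: a => /=; try by leaf.
  - move=> a IHa b IHb p /in_prodl [p1 [p2 [H1 [H2 [<-|[]]]]]] w /= [Ga Gb] [Fa Fb].
    split; [exact: (IHa p1 H1 w Ga Fa) | exact: (IHb p2 H2 w Gb Fb)].
  - move=> a IHa b IHb p /in_prodl [p1 [p2 [H1 [H2 [<-|[]]]]]] w /= [Ga Gb] [Fa|Fb].
    by left; exact: (IHa p1 H1 w Ga Fa). by right; exact: (IHb p2 H2 w Gb Fb).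
  - move=> a IHa p /List.in_map_iff [q [<- Hq]] w /= Hg Hf.
    exact: (IHa q Hq _ (E_guard Hq w 1 Hg) Hf).
  - move=> a IHa b IHb p /in_prodl [p1 [p2 [H1 [H2 [<-|[<-|[]]]]]]] w /=.
    + move=> [Hgf [Ga Gb]] [HG | [k [Hk Hj]]].
      * have [k [_ Hb]] := Hgf 0.
        exists k; split; first exact: Hb.
        move=> j _; exact: (IHa p1 H1 _ (E_guard H1 w j Ga) (HG j)).
      * exists k; split.
        -- exact: (IHb p2 H2 _ (E_guard H2 w k Gb) Hk).
        -- move=> j Hjk; exact: (IHa p1 H1 _ (E_guard H1 w j Ga) (Hj j Hjk)).
    + by move=> _ [].
  - move=> a IHa b IHb p /in_prodl [p1 [p2 [H1 [H2 [<-|[]]]]]] w /= [Ga Gb] [HG | [k [Hk Hj]]].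
    + left => j; exact: (IHa p1 H1 _ (E_guard H1 w j Ga) (HG j)).
    + right; exists k; split.
      * exact: (IHb p2 H2 _ (E_guard H2 w k Gb) Hk).
      * move=> j Hjk; exact: (IHa p1 H1 _ (E_guard H1 w j Ga) (Hj j Hjk)).
Qed.

Lemma E_complete {Ap : finType} (a : formula Ap) :
  forall w, exists p, List.In p (E a) /\ sat w p.1 /\
    exists n, forall k, n <= k -> sat (Defs.suffix w k) a -> sat (Defs.suffix w k) p.2.
Proof.
  elim: a; try by (intros; eexists; split; [left; reflexivity | split; [done | exists 0; auto]]).
  - move=> a IHa b IHb w.
    have [p1 [H1 [G1 [n1 F1]]]] := IHa w; have [p2 [H2 [G2 [n2 F2]]]] := IHb w.
    exists (Fand p1.1 p2.1, Fand p1.2 p2.2); split.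
      apply/in_prodl; exists p1, p2; do 2 split => //; by left.
    split => //; exists (n1 + n2) => k Hk /= [Ha Hb]; split.
    + apply: F1 => //; lia.
    + apply: F2 => //; lia.
  - move=> a IHa b IHb w.
    have [p1 [H1 [G1 [n1 F1]]]] := IHa w; have [p2 [H2 [G2 [n2 F2]]]] := IHb w.
    exists (Fand p1.1 p2.1, For p1.2 p2.2); split.
      apply/in_prodl; exists p1, p2; do 2 split => //; by left.
    split => //; exists (n1 + n2) => k Hk /= [Ha|Hb].
    + left; apply: F1 => //; lia.
    + right; apply: F2 => //; lia.
  - move=> a IHa w.
    have [p1 [H1 [G1 [n1 F1]]]] := IHa w.
    exists (p1.1, FX p1.2); split.
      apply/List.in_map_iff; by exists p1.
    split => //; exists n1 => k Hk /=; rewrite !suffix_add => Ha.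
    apply: F1 => //; lia.
  - move=> a IHa b IHb w.
    have [p1 [H1 [G1 [n1 F1]]]] := IHa w; have [p2 [H2 [G2 [n2 F2]]]] := IHb w.
    case: (classic (sat w (FGF b))) => HGF.
    + exists (Fand (FGF b) (Fand p1.1 p2.1), FW p1.2 p2.2); split.
        apply/in_prodl; exists p1, p2; do 2 split => //; by left.
      split => //; exists (n1 + n2) => k Hk /= [j [Hb Ha]].
      right; exists j; split.
      * move: Hb; rewrite !suffix_add => Hb; apply: F2 => //; lia.
      * move=> i Hi; move: (Ha i Hi); rewrite !suffix_add => Hai; apply: F1 => //; lia.
    + have [n0 Hn0] : exists n0, forall k, n0 <= k -> ~ sat (Defs.suffix w k) b.
        apply: NNPP => Hc; apply: HGF => n; apply: NNPP => Hn; apply: Hc.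
        exists n => k Hk Hb; apply: Hn; by exists k.
      exists (Fand p1.1 p2.1, Ffalse Ap); split.
        apply/in_prodl; exists p1, p2; do 2 split => //; by right; left.
      split => //; exists n0 => k Hk /= [j [Hb Ha]].
      move: Hb; rewrite suffix_add; apply: Hn0; lia.
  - move=> a IHa b IHb w.
    have [p1 [H1 [G1 [n1 F1]]]] := IHa w; have [p2 [H2 [G2 [n2 F2]]]] := IHb w.
    exists (Fand p1.1 p2.1, FW p1.2 p2.2); split.
      apply/in_prodl; exists p1, p2; do 2 split => //; by left.
    split => //; exists (n1 + n2) => k Hk /= [HG|[j [Hb Ha]]].
    + left => i; move: (HG i); rewrite !suffix_add => Hai; apply: F1 => //; lia.
    + right; exists j; split.
      * move: Hb; rewrite !suffix_add => Hb; apply: F2 => //; lia.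
      * move=> i Hi; move: (Ha i Hi); rewrite !suffix_add => Hai; apply: F1 => //; lia.
Qed.

Arguments E_sound {Ap a p}.

Lemma Dl_sat {Ap : finType} (l : list (formula Ap * formula Ap)) w :
  sat w (Dl l) <-> exists p, List.In p l /\ sat w p.1 /\ forall k, sat (Defs.suffix w k) p.2.
Proof.
  elim: l => [|q l IH] /=.
  - split => [[]|[p [[] _]]].
  - rewrite IH; split.
    + move=> [[G [HG|[k [[] _]]]]|[p [Hp R]]].
      * by exists q; split; [left|].
      * by exists p; split; [right|].
    + move=> [p [[<-|Hp] [G HG]]].
      * by left; split => //; left.
      * by right; exists p.
Qed.

Lemma D_sound {Ap : finType} {a : formula Ap} {w} :
  sat w (Dl (E a)) -> forall k, sat (Defs.suffix w k) a.
Proof.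
  move/Dl_sat => [p [Hp [G HG]]] k.
  exact: (E_sound Hp _ (E_guard Hp w k G) (HG k)).
Qed.

Lemma D_complete {Ap : finType} {a : formula Ap} {w} :
  (forall k, sat (Defs.suffix w k) a) -> exists n, sat (Defs.suffix w n) (Dl (E a)).
Proof.
  move=> H; have [p [Hp [G [n F]]]] := E_complete a w.
  exists n; apply/Dl_sat; exists p; split => //; split; first exact: (E_guard Hp w n G).
  move=> k; rewrite suffix_add; apply: F; [exact: leq_addr | exact: H].
Qed.

Lemma N_equiv {Ap : finType} (phi : formula Ap) :
  forall w, sat w (N phi) <-> sat w phi.
Proof.
  elim: phi => /=; try by (intros; reflexivity).
  - by move=> a IHa b IHb w; rewrite IHa IHb.
  - by move=> a IHa b IHb w; rewrite IHa IHb.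
  - by move=> a IHa w; rewrite IHa.
  - by move=> a IHa b IHb w; setoid_rewrite IHa; setoid_rewrite IHb.
  - move=> a IHa b IHb w; setoid_rewrite IHa; setoid_rewrite IHb; split.
    + move=> [k [[Hb|HD] Ha]].
      * by right; exists k.
      * left => m; case: (ltnP m k) => Hmk; first exact: Ha.
        have := D_sound HD (m - k); rewrite suffix_add.
        by have -> : k + (m - k) = m by lia.
    + move=> [HG|[k [Hb Ha]]].
      * have [n Hn] := D_complete HG; exists n; split; first by right.
        move=> j _; exact: HG.
      * by exists k; split; first left.
Qed.

Lemma ubw_mono {Ap : finType} (f : formula Ap) : ubw_aux false f <= ubw_aux true f.
Proof. elim: f => //= *; lia. Qed.

Lemma E_ubw {Ap : finType} (a : formula Ap) :
  forall p, List.In p (E a) -> ubw_aux true p.1 = 0 /\ ubw_aux true p.2 = 0.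
Proof.
  elim: a; try by leaf.
  - move=> a IHa b IHb p /in_prodl [p1 [p2 [H1 [H2 [<-|[]]]]]] /=.
    have := IHa p1 H1; have := IHb p2 H2; lia.
  - move=> a IHa b IHb p /in_prodl [p1 [p2 [H1 [H2 [<-|[]]]]]] /=.
    have := IHa p1 H1; have := IHb p2 H2; lia.
  - move=> a IHa p /List.in_map_iff [q [<- Hq]] /=; exact: IHa.
  - move=> a IHa b IHb p /in_prodl [p1 [p2 [H1 [H2 [<-|[<-|[]]]]]]] /=.
    + have := IHa p1 H1; have := IHb p2 H2; lia.
    + have := IHa p1 H1; have := IHb p2 H2; lia.
  - move=> a IHa b IHb p /in_prodl [p1 [p2 [H1 [H2 [<-|[]]]]]] /=.
    have := IHa p1 H1; have := IHb p2 H2; lia.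
Qed.

Lemma Dl_ubw {Ap : finType} (l : list (formula Ap * formula Ap)) :
  (forall p, List.In p l -> ubw_aux true p.1 = 0 /\ ubw_aux true p.2 = 0) ->
  ubw_aux false (Dl l) = 0.
Proof.
  elim: l => [|q l IH] //= H.
  have := H q (or_introl erefl); have := IH (fun p Hp => H p (or_intror Hp)).
  have := ubw_mono q.1; lia.
Qed.

Lemma N_ubw {Ap : finType} (phi : formula Ap) : ubw_aux false (N phi) = 0.
Proof.
  elim: phi => //=; try (intros; lia).
  move=> a IHa b IHb; have := @Dl_ubw _ (E a) (E_ubw a); lia.
Qed.

Definition nprop {Ap : finType} (a x : formula Ap) : Prop :=
  match x with FGF y => subf y a | FFG _ => subf x a | _ => True end.

Lemma subf_refl {Ap : finType} (a : formula Ap) : subf a a.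
Proof. by case: a => *; left. Qed.

Lemma subf_trans {Ap : finType} (a b c : formula Ap) : subf a b -> subf b c -> subf a c.
Proof.
  move=> Hab; elim: c => /=; try by (intros; repeat match goal with H : _ \/ _ |- _ => destruct H end; subst; auto).
Qed.

Lemma subf_nprop {Ap : finType} (a x : formula Ap) : subf x a -> nprop a x.
Proof.
  case: x => //= y H; apply: subf_trans H => /=; right; exact: subf_refl.
Qed.

Lemma nmono {Ap : finType} (a c x : formula Ap) :
  nprop a x -> (forall z, subf z a -> subf z c) -> nprop c x.
Proof. by case: x => //= y H I; apply: I. Qed.

Arguments nmono {Ap a c x}.
Ltac incl := let z := fresh in let Hz := fresh in intros z Hz; simpl; tauto.

Lemma E_subf {Ap : finType} (a : formula Ap) :
  forall p, List.In p (E a) -> forall x, (subf x p.1 -> nprop a x) /\ (subf x p.2 -> nprop a x).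
Proof.
  elim: a => /=.
  all: try by (intros; simpl in *; match goal with H : _ \/ False |- _ => destruct H as [H|[]]; subst end;
     simpl; split; [let Hs := fresh in intro Hs; simpl in Hs; destruct Hs as [Hs|[]]; subst; exact I | let Hs := fresh in intro Hs; apply: subf_nprop; exact Hs]).
  all: try (move=> a IHa b IHb p /in_prodl [p1 [p2 [H1 [H2 [<-|[]]]]]] x /=; split => H;
    repeat (destruct H as [H|H]); try (subst; exact I);
    first [ apply: (nmono (proj1 (IHa p1 H1 x) H)) | apply: (nmono (proj2 (IHa p1 H1 x) H))
          | apply: (nmono (proj1 (IHb p2 H2 x) H)) | apply: (nmono (proj2 (IHb p2 H2 x) H)) ]; incl).
  - move=> a IHa p /List.in_map_iff [q [<- Hq]] x /=; split => H;
    repeat (destruct H as [H|H]); try (subst; exact I);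
    first [ apply: (nmono (proj1 (IHa q Hq x) H)) | apply: (nmono (proj2 (IHa q Hq x) H)) ]; incl.
  - move=> a IHa b IHb p /in_prodl [p1 [p2 [H1 [H2 [<-|[<-|[]]]]]]] x /=; split => H.
    all: repeat (destruct H as [H|H]); try (subst; exact I); try contradiction.
    all: try (first [ apply: (nmono (proj1 (IHa p1 H1 x) H)) | apply: (nmono (proj2 (IHa p1 H1 x) H))
          | apply: (nmono (proj1 (IHb p2 H2 x) H)) | apply: (nmono (proj2 (IHb p2 H2 x) H)) ]; incl).
    + subst x => /=; right; right; exact: subf_refl.
    + apply: subf_nprop => /=; tauto.
Qed.

Lemma Dl_subf {Ap : finType} (l : list (formula Ap * formula Ap)) (c : formula Ap) :
  (forall p, List.In p l -> forall x, (subf x p.1 -> nprop c x) /\ (subf x p.2 -> nprop c x)) ->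
  forall x, subf x (Dl l) -> nprop c x.
Proof.
  elim: l => [|q l IH] Hl x /= H.
  - by case: H => [->|[]].
  - repeat (destruct H as [H|H]); try (subst; exact I); try contradiction.
    + exact: (proj1 (Hl q (or_introl erefl) x) H).
    + exact: (proj2 (Hl q (or_introl erefl) x) H).
    + exact: (IH (fun p Hp => Hl p (or_intror Hp)) x H).
Qed.

Arguments Dl_subf {Ap l c}.
Lemma N_subf {Ap : finType} (phi : formula Ap) :
  forall x, subf x (N phi) -> nprop phi x.
Proof.
  elim: phi; try by (intros; apply: subf_nprop).
  all: try (move=> a IHa b IHb x /= H; repeat (destruct H as [H|H]); try (subst; exact I);
    first [ apply: (nmono (IHa x H)) | apply: (nmono (IHb x H))
          | apply: (nmono (Dl_subf (E_subf a) x H)) ]; incl).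
  move=> a IHa x /= H; repeat (destruct H as [H|H]); try (subst; exact I).
  apply: (nmono (IHa x H)); incl.
Qed.

Lemma fsize_gt0 {Ap : finType} (f : formula Ap) : 0 < fsize f.
Proof. by case: f. Qed.

Lemma E_len {Ap : finType} (a : formula Ap) : length (E a) <= 2 ^ fsize a.
Proof.
  elim: a => /=; try by (intros; rewrite expn_gt0).
  all: try (move=> a IHa b IHb; rewrite (@len_prodl _ _ _ _ 1) // expnS expnD; nia).
  - move=> a IHa; rewrite List.length_map expnS; lia.
  - move=> a IHa b IHb; rewrite (@len_prodl _ _ _ _ 2) // expnS expnD; nia.
Qed.

Lemma E_size {Ap : finType} (a : formula Ap) :
  forall p, List.In p (E a) -> fsize p.1 <= fsize a ^ 2 /\ fsize p.2 <= fsize a.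
Proof.
  elim: a => /=.
  all: try by (intros; simpl in *; match goal with H : _ \/ False |- _ => destruct H as [H|[]]; subst end;
     simpl; split => //; rewrite expn_gt0).
  all: try (move=> a IHa b IHb p /in_prodl [p1 [p2 [H1 [H2 [<-|[]]]]]] /=;
    have := IHa p1 H1; have := IHb p2 H2; have := fsize_gt0 a; have := fsize_gt0 b; nia).
  - move=> a IHa p /List.in_map_iff [q [<- Hq]] /=.
    have := IHa q Hq; have := fsize_gt0 a; nia.
  - move=> a IHa b IHb p /in_prodl [p1 [p2 [H1 [H2 [<-|[<-|[]]]]]]] /=;
    have := IHa p1 H1; have := IHb p2 H2; have := fsize_gt0 a; have := fsize_gt0 b; nia.
Qed.

Lemma Dl_size {Ap : finType} (l : list (formula Ap * formula Ap)) B :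
  (forall p, List.In p l -> fsize p.1 + fsize p.2 + 4 <= B) ->
  fsize (Dl l) <= length l * B + 1.
Proof.
  elim: l => [|q l IH] //= H.
  have := H q (or_introl erefl); have := IH (fun p Hp => H p (or_intror Hp)); lia.
Qed.

Lemma D_size {Ap : finType} (a : formula Ap) : fsize (Dl (E a)) <= 6 * 8 ^ fsize a + 1.
Proof.
  set n := fsize a.
  have H := @Dl_size _ (E a) (n ^ 2 + n + 4) (fun p Hp => ltac:(have := E_size a p Hp; lia)).
  have HL := E_len a; fold n in HL.
  have Hn : n < 2 ^ n by apply: ltn_expl.
  have E8 : 8 ^ n = 2 ^ n * 2 ^ n * 2 ^ n by rewrite -!expnMn.
  move: H HL Hn; rewrite E8; set X := 2 ^ n; move=> H HL Hn.
  have h1 : length (E a) * (n ^ 2 + n + 4) <= X * (n ^ 2 + n + 4) by apply: leq_mul.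
  have h2 : n ^ 2 + n + 4 <= 6 * (X * X) by rewrite expnS expn1; nia.
  have h3 : X * (n ^ 2 + n + 4) <= X * (6 * (X * X)) by apply: leq_mul.
  lia.
Qed.

Lemma arith2 {X Y a b P Q : nat} : 16 <= X -> 16 <= Y -> 1 <= a -> 1 <= b ->
  P <= X * a -> Q <= Y * b -> forall R, R <= 6 * X + 1 ->
  P + Q + R + 2 <= 16 * (X * Y) * (a + b).+1.
Proof.
  move=> hX hY ha hb hP hQ R hR.
  have h1 : X * a <= X * Y * a by apply: leq_mul => //; apply: leq_pmulr; lia.
  have h2 : Y * b <= X * Y * b by apply: leq_mul => //; apply: leq_pmull; lia.
  have h3 : 16 * X <= X * Y by rewrite mulnC; apply: leq_mul.
  nia.
Qed.

Lemma pow16 {n} : 0 < n -> 16 <= 16 ^ n.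
Proof. move=> h; by rewrite -{1}(expn1 16) leq_pexp2l. Qed.

Lemma N_size {Ap : finType} (phi : formula Ap) : fsize (N phi) <= 16 ^ fsize phi * fsize phi.
Proof.
  elim: phi => /=.
  all: try by (intros; rewrite expnS; have := expn_gt0 16 (fsize _); nia).
  all: try (move=> a IHa; rewrite expnS; have := pow16 (fsize_gt0 a); nia).
  all: move=> a IHa b IHb; rewrite expnS expnD.
  all: have := arith2 (pow16 (fsize_gt0 a)) (pow16 (fsize_gt0 b)) (fsize_gt0 a) (fsize_gt0 b) IHa IHb.
  all: try (move=> /(_ 0 (leq0n _)); lia).
  have HD := D_size a.
  have H8 : 8 ^ fsize a <= 16 ^ fsize a by rewrite leq_exp2r // fsize_gt0.
  move=> /(_ (fsize (Dl (E a)))); lia.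
Qed.

Theorem proposition1 (Ap : finType) (phi : formula Ap) :
  exists phi' : formula Ap,
    [/\ fequiv phi' phi,
        first_normal_form phi',
        fsize phi' <= 4 ^ (2 * fsize phi) * fsize phi,
        (forall psi, subf (FGF psi) phi' -> subf psi phi)
      & (forall chi, subf (FFG chi) phi' -> subf (FFG chi) phi)].
Proof.
  exists (N phi); split.
  - exact: N_equiv.
  - exact: N_ubw.
  - by rewrite expnM; apply: N_size.
  - move=> psi H; exact: (N_subf phi _ H).
  - move=> chi H; exact: (N_subf phi _ H).
Qed.
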